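(* Let $n=2k$ with $k\ge1$, and let $$W(X_1,\dots,X_n)=\sum_{j=1}^nX_j+\sum_{j=1}^n\frac1{X_j}+\prod_{j=1}^nX_j$$ on $(\mathbb{C}^* )^n$. Then every critical point of $W$ in $(\mathbb{C}^* )^n$ is non-degenerate, i.e. the Hessian matrix $(\partial^2W/\partial X_j\partial X_k)$ is invertible at every point where $\nabla W=0$.
   Context: $W$ is the superpotential $\sum_{v\in\mathrm{vert}(P)}x^v$ of the pseudo del Pezzo polytope $P^k_{pdP}\subset\mathbb{R}^{2k}$. This polytope is the convex hull of $\pm e_1,\dots,\pm e_{2k}$ and $e_1+\dots+e_{2k}$, and it is the polytope associated with the pseudo del Pezzo toric variety $U_k$. *)

(* Defs.v *)
From HB Require Import structures.
From mathcomp Require Import all_boot all_order all_algebra.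
Set Implicit Arguments. Unset Strict Implicit. Unset Printing Implicit Defensive.
Import Order.TTheory GRing.Theory Num.Theory.
Local Open Scope ring_scope.

(* A Laurent polynomial in n variables over C, given as a finite list of
   monomials (coefficient, exponent vector in Z^n). *)
Definition laurent (C : Type) (n : nat) := seq (C * ('I_n -> int)).

Definition leval (C : unitRingType) (n : nat) (p : laurent C n) (x : 'I_n -> C) : C :=
  \sum_(m <- p) (fst m * \prod_(i < n) (x i) ^ (snd m i)).

Definition lderiv (C : unitRingType) (n : nat) (j : 'I_n) (p : laurent C n) : laurent C n :=
  [seq (fst m * (snd m j)%:~R, fun i => snd m i - (i == j)%:Z) | m <- p].

Definition W_pdP (C : unitRingType) (n : nat) : laurent C n :=
  [seq (1, fun i => (i == j)%:Z) | j <- enum 'I_n]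
  ++ [seq (1, fun i => - (i == j)%:Z) | j <- enum 'I_n]
  ++ [:: (1, fun _ => 1%:Z)].

Definition gradient (C : unitRingType) (n : nat) (p : laurent C n) (x : 'I_n -> C) : 'I_n -> C :=
  fun j => leval (lderiv j p) x.

Definition hessian (C : unitRingType) (n : nat) (p : laurent C n) (x : 'I_n -> C) : 'M[C]_n :=
  \matrix_(i < n, j < n) leval (lderiv i (lderiv j p)) x.

(* Main.v *)
Require Import Defs.
From HB Require Import structures.
From mathcomp Require Import all_boot all_order all_algebra.
From mathcomp Require Import ring lra zify.
Import Order.TTheory GRing.Theory Num.Theory.
Local Open Scope ring_scope.




Lemma F2_contra (D : int) (m r : nat) :
  4 * (2 * D - 1) ^+ m * (2 * D + 1) ^+ r <> (2 * D + 1) ^+ (m.+1) * (2 * D - 1) ^+ r.+1.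
Proof.
move=> /(congr1 (fun z : int => (z%:~R : 'F_2))).
rewrite !rmorphM !rmorphXn !rmorphD /= !rmorphM /= rmorphN /= !rmorph1.
have h2 : (1 + 1 : 'F_2) = 0 by apply/eqP.
have h1 : (- 1 : 'F_2) = 1 by apply/eqP.
have e2 : (2%:~R : 'F_2) = 1 + 1 by apply/eqP.
rewrite e2 h2 h1.
rewrite !mul0r !add0r addr0 !expr1n !mulr1 h2.
by move/eqP; rewrite eq_sym oner_eq0.
Qed.

Lemma core2 (C : numFieldType) (a : C) (m r k : nat) : a != 0 -> (m + r = 2 * k)%N ->
  a - a^-1 = - (a ^+ m * (- a^-1) ^+ r) -> 1 + a^+2 != 0 ->
  1 + m%:R * ((1 - a^+2)/(1 + a^+2)) + r%:R * ((1 - (-a^-1)^+2)/(1 + (-a^-1)^+2)) != 0.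
Proof.
move=> a0 hmr E3 a2 ; apply/negP => /eqP HQ.
set d : C := m%:R - r%:R.
have b2 : 1 + (-a^-1)^+2 != 0.
  rewrite sqrrN; apply: contra a2 => /eqP h; apply/eqP.
  have -> : 1 + a^+2 = a^+2 * (1 + (a^-1)^+2) by field.
  by rewrite h mulr0.
have E1 : 1 + a^+2 + d * (1 - a^+2) = 0.
  have := congr1 (fun q => q * (1 + a^+2)) HQ; rewrite mul0r => <-.
  rewrite /d; field; by rewrite a0 addrC a2.
have hs : a^+2 * (d - 1) = d + 1.
  apply/eqP; rewrite -subr_eq0; apply/eqP.
  have -> : a^+2 * (d-1) - (d+1) = -(1 + a^+2 + d * (1 - a^+2)) by ring.
  by rewrite E1 oppr0.
have ht : (a^-1)^+2 * (d + 1) = d - 1.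
  by rewrite -hs; field.
have h4 : (a - a^-1)^+2 * ((d-1)*(d+1)) = 4.
  have -> : (a - a^-1)^+2 * ((d-1)*(d+1)) = (a^+2*(d-1))*(d+1) - 2*((d-1)*(d+1)) + ((a^-1)^+2*(d+1))*(d-1) by field.
  by rewrite hs ht; ring.
have hP : (a - a^-1)^+2 = (a^+2)^+m * ((a^-1)^+2)^+r.
  by rewrite E3 sqrrN exprMn !(exprAC _ _ 2) sqrrN.
have key : 4 * (d-1)^+m * (d+1)^+r = (d+1)^+m.+1 * (d-1)^+r.+1.
  rewrite -h4 hP.
  have -> : (a^+2)^+m * ((a^-1)^+2)^+r * ((d-1)*(d+1)) * (d-1)^+m * (d+1)^+r
      = (a^+2*(d-1))^+m * ((a^-1)^+2*(d+1))^+r * ((d-1)*(d+1)) by rewrite !exprMn; ring.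
  by rewrite hs ht !exprS; ring.
have hD : (m%:Z - r%:Z = 2 * (k%:Z - r%:Z))%R by lia.
have hd : d = (2 * (k%:Z - r%:Z))%:~R by rewrite -hD rmorphB.
apply: (F2_contra (k%:Z - r%:Z) m r); apply: (intr_inj (R:=C)).
rewrite !rmorphM !rmorphXn !rmorphD /= -hd rmorphN !rmorph1 -key.
congr (_ * _ * _); ring.
Qed.


Lemma core1 (C : numFieldType) (a : C) (m r k : nat) : a != 0 -> (m + r = 2 * k)%N ->
  a - a^-1 = - (a ^+ m * (- a^-1) ^+ r) -> 1 + a^+2 != 0.
Proof.
move=> a0 hmr E3; apply/negP => /eqP h.
have hsq : a^+2 = -1 by apply/eqP; rewrite -subr_eq0 opprK addrC h.
have ai : a^-1 = - a.
  apply: (mulfI a0); rewrite mulfV // mulrN -expr2 hsq opprK //.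
rewrite ai opprK -exprD hmr exprM hsq in E3.
have := congr1 (fun z => z ^+ 2) E3.
rewrite sqrrN -exprM mulnC exprM sqrrN !expr1n.
have -> : (a + a)^+2 = 4 * a^+2 by ring.
rewrite hsq => /eqP; rewrite -subr_eq0.
have -> : 4 * -1 - 1 = - (5%:R : C) by ring.
by rewrite oppr_eq0 pnatr_eq0.
Qed.


Section Eval.
Variable (F : fieldType) (n : nat) (x : 'I_n -> F).
Hypothesis hx : forall l, x l != 0.

Lemma prod_delta (j : 'I_n) (c : int) :
  \prod_l x l ^ (c * (l == j)%:Z) = x j ^ c.
Proof.
rewrite (bigD1 j) //= eqxx mulr1 big1 ?mulr1 // => l /negbTE ->.
by rewrite mulr0 expr0z.
Qed.

Lemma mono_gen (c : int) (s : seq ('I_n * int)) :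
  \prod_l x l ^ (c + \sum_(p <- s) p.2 * (l == p.1)%:Z)
  = (\prod_l x l) ^ c * \prod_(p <- s) x p.1 ^ p.2.
Proof.
elim: s => [|p s IH].
  rewrite big_nil mulr1.
  under eq_bigr => l _ do rewrite big_nil addr0.
  by rewrite (big_morph (fun y => y ^ c) (fun y z => expfzMl y z c) (exp1rz _ c)).
rewrite big_cons mulrCA -IH -prod_delta -big_split /=.
apply: eq_bigr => l _; rewrite big_cons addrCA !expfzDr //.
Qed.

Lemma mono_ext (e e' : 'I_n -> int) : (forall l, e l = e' l) ->
  \prod_l x l ^ e l = \prod_l x l ^ e' l.
Proof. by move=> h; apply: eq_bigr => l _; rewrite h. Qed.

End Eval.

Lemma leval_cat (F : unitRingType) n (p q : laurent F n) x :
  leval (p ++ q) x = leval p x + leval q x.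
Proof. by rewrite /leval big_cat. Qed.

Lemma lderiv_cat (F : unitRingType) n j (p q : laurent F n) :
  lderiv j (p ++ q) = lderiv j p ++ lderiv j q.
Proof. by rewrite /lderiv map_cat. Qed.

Lemma lderiv_map (F : unitRingType) n j (f : 'I_n -> F * ('I_n -> int)) :
  lderiv j (map f (enum 'I_n)) =
  map (fun l => ((f l).1 * ((f l).2 j)%:~R, fun i => (f l).2 i - (i == j)%:Z)) (enum 'I_n).
Proof. by rewrite /lderiv -map_comp. Qed.

Lemma leval_map (F : unitRingType) n (f : 'I_n -> F * ('I_n -> int)) x :
  leval (map f (enum 'I_n)) x = \sum_l ((f l).1 * \prod_i x i ^ (f l).2 i).
Proof. by rewrite /leval big_map enumT. Qed.

Lemma sum_pick (R : nmodType) n (j : 'I_n) (G : 'I_n -> R) :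
  (forall l, l != j -> G l = 0) -> \sum_l G l = G j.
Proof. by move=> h; rewrite (bigD1 j) //= big1 ?addr0. Qed.

Lemma grad_eq (F : fieldType) n (x : 'I_n -> F) (hx : forall l, x l != 0) j :
  gradient (W_pdP F n) x j = 1 - (x j ^+ 2)^-1 + (\prod_i x i) / x j.
Proof.
rewrite /gradient /W_pdP !lderiv_cat !lderiv_map !leval_cat !leval_map /=.
rewrite !(@sum_pick _ _ j); try by move=> l; rewrite eq_sym => /negbTE -> /=; rewrite ?oppr0 mulr0z mulr0 mul0r.
rewrite /leval big_cons big_nil /= eqxx !mul1r !addr0.
rewrite (@mono_ext _ _ x (fun i => (i == j)%:Z - (i == j)%:Z) (fun l => 0 + \sum_(p <- [:: (j, 1%Z); (j, -1%Z)]) p.2 * (l == p.1)%:Z)); last first.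
  by move=> l; rewrite !big_cons big_nil /=; ring.
rewrite (@mono_ext _ _ x (fun i => - (i == j)%:Z - (i == j)%:Z) (fun l => 0 + \sum_(p <- [:: (j, -1%Z); (j, -1%Z)]) p.2 * (l == p.1)%:Z)); last first.
  by move=> l; rewrite !big_cons big_nil /=; ring.
rewrite (@mono_ext _ _ x (fun i => 1%Z - (i == j)%:Z) (fun l => 1 + \sum_(p <- [:: (j, -1%Z)]) p.2 * (l == p.1)%:Z)); last first.
  by move=> l; rewrite !big_cons big_nil /=; ring.
rewrite !mono_gen // !big_cons !big_nil /= !expr0z !expr1z !exprN1 !mul1r !mulr1.
rewrite divff // rmorphN rmorph1; field; exact: hx.
Qed.

Lemma hess_eq (F : fieldType) n (x : 'I_n -> F) (hx : forall l, x l != 0) i j :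
  hessian (W_pdP F n) x i j =
  (i == j)%:R * (2 / x i ^+ 3) + (1 - (i == j)%:R) * ((\prod_l x l) / (x i * x j)).
Proof.
rewrite /hessian mxE /W_pdP !lderiv_cat !lderiv_map !leval_cat !leval_map /=.
rewrite !(@sum_pick _ _ j); try by move=> l; rewrite eq_sym => /negbTE -> /=; rewrite ?oppr0 mulr0z mulr0 !mul0r.
rewrite /leval big_cons big_nil /= eqxx !mul1r !addr0 subrr mulr0z mul0r add0r.
case: (eqVneq i j) => [->|hij].
  rewrite (@mono_ext _ _ x (fun l => - (l == j)%:Z - (l == j)%:Z - (l == j)%:Z)
     (fun l => 0 + \sum_(p <- [:: (j, -1%Z); (j, -1%Z); (j, -1%Z)]) p.2 * (l == p.1)%:Z)); last first.
    by move=> l; rewrite !big_cons big_nil /=; ring.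
  rewrite !mono_gen // !big_cons !big_nil /= !expr0z !exprN1 !mul1r !mulr1.
  rewrite !(mulrNz, mulrzBr) /= !mulr1n.
  field; exact: hx.
rewrite (@mono_ext _ _ x (fun l => 1%Z - (l == j)%:Z - (l == i)%:Z)
     (fun l => 1 + \sum_(p <- [:: (j, -1%Z); (i, -1%Z)]) p.2 * (l == p.1)%:Z)); last first.
  by move=> l; rewrite !big_cons big_nil /=; ring.
rewrite !mono_gen // !big_cons !big_nil /= !expr1z !exprN1 !mul1r !mulr1.
rewrite !(mulrNz, mulrzBr) /= ?mulr1n.
rewrite mulr0z oppr0 subrr mulr0 mul0r add0r.
field; by rewrite !hx.
Qed.

Lemma split_sum (V : nmodType) (T : finType) (A : {set T}) (F : T -> V) (u w : V) :
  (forall j, j \in A -> F j = u) -> (forall j, j \notin A -> F j = w) ->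
  \sum_j F j = u *+ #|A| + w *+ #|~: A|.
Proof.
move=> hu hw; rewrite (bigID (fun j => j \in A)) /=; congr (_ + _).
  by rewrite -sumr_const; apply: eq_big => // j /hu.
by rewrite -sumr_const; apply: eq_big => [j|j]; rewrite ?in_setC // => /hw.
Qed.
Lemma split_prod (R : comRingType) (T : finType) (A : {set T}) (F : T -> R) (u w : R) :
  (forall j, j \in A -> F j = u) -> (forall j, j \notin A -> F j = w) ->
  \prod_j F j = u ^+ #|A| * w ^+ #|~: A|.
Proof.
move=> hu hw; rewrite (bigID (fun j => j \in A)) /=; congr (_ * _).
  by rewrite -prodr_const; apply: eq_big => // j /hu.
by rewrite -prodr_const; apply: eq_big => [j|j]; rewrite ?in_setC // => /hw.
Qed.

Theorem mainTheorem7 (C : numClosedFieldType) (k : nat) (hk : (1 <= k)%N)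
    (x : 'I_(2 * k) -> C) :
  (forall i, x i != 0) ->
  (forall j, gradient (W_pdP C (2 * k)) x j = 0) ->
  hessian (W_pdP C (2 * k)) x \in unitmx.
Proof.
move=> hx hg.
set P := \prod_i x i.
have G : forall j, x j ^+ 2 + P * x j - 1 = 0.
  move=> j; have := hg j; rewrite grad_eq // => h.
  have -> : x j ^+ 2 + P * x j - 1 = (1 - (x j ^+ 2)^-1 + P / x j) * x j ^+ 2.
    by rewrite /P; field; apply: hx.
  by rewrite h mul0r.
have n0 : (0 < 2 * k)%N by lia.
set i0 : 'I_(2 * k) := Ordinal n0.
set a := x i0.
have a0 : a != 0 by apply: hx.
have aP : a + P = a^-1.
  apply/eqP; rewrite -subr_eq0; apply/eqP.
  have -> : a + P - a^-1 = (a ^+ 2 + P * a - 1) / a by field.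
  by rewrite G mul0r.
have roots : forall j, x j = a \/ x j = - a^-1.
  move=> j.
  have : (x j - a) * (x j + (a + P)) = 0.
    have -> : (x j - a) * (x j + (a + P)) = (x j ^+ 2 + P * x j - 1) - (a ^+ 2 + P * a - 1) by ring.
    by rewrite !G subrr.
  move/eqP; rewrite mulf_eq0 => /orP [/eqP h|/eqP h].
    by left; apply/eqP; rewrite -subr_eq0 h.
  right; apply/eqP; rewrite -subr_eq0 opprK -aP h //.
set A := [set j | x j == a].
have hA : forall j, j \in A -> x j = a by move=> j; rewrite inE => /eqP.
have hB : forall j, j \notin A -> x j = - a^-1.
  by move=> j; rewrite inE; case: (roots j) => ->; rewrite ?eqxx.
have hmr : (#|A| + #|~: A| = 2 * k)%N by rewrite cardsC card_ord.
have hPm : P = a ^+ #|A| * (- a^-1) ^+ #|~: A| by rewrite /P (@split_prod _ _ _ _ _ _ hA hB).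
have E3 : a - a^-1 = - (a ^+ #|A| * (- a^-1) ^+ #|~: A|).
  by rewrite -hPm -aP; ring.
have a2 := @core1 _ _ _ _ _ a0 hmr E3.
have Q0 := @core2 _ _ _ _ _ a0 hmr E3 a2.
have x2 : forall j, 1 + x j ^+ 2 != 0.
  move=> j; case: (roots j) => ->; first exact: a2.
  rewrite sqrrN; apply: contra a2 => /eqP h; apply/eqP.
  have -> : 1 + a^+2 = a^+2 * (1 + (a^-1)^+2) by field.
  by rewrite h mulr0.
have Qs : 1 + \sum_j (1 - x j ^+ 2) / (1 + x j ^+ 2) != 0.
  rewrite (@split_sum _ _ A _ ((1 - a ^+ 2) / (1 + a ^+ 2)) ((1 - (- a^-1) ^+ 2) / (1 + (- a^-1) ^+ 2))).
  - by move: Q0; rewrite !mulr_natl -addrA.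
  - by move=> j /hA ->.
  - by move=> j /hB ->.
rewrite -row_free_unit -kermx_eq0; apply/eqP/row_matrixP => i; rewrite row0.
set H := hessian _ _.
set v := row i (kermx H).
have hv : v *m H = 0 by rewrite /v -row_mul mulmx_ker row0.
clearbody v.
set S := \sum_l v 0 l / x l.
have Ej : forall j, v 0 j * (1 + x j ^+ 2) = - (P * x j ^+ 2 * S).
  move=> j.
  have := congr1 (fun M : 'rV_(2 * k) => M 0 j) hv; rewrite !mxE /=.
  under eq_bigr => l _ do rewrite /H hess_eq //.
  have sp : forall l, v 0 l * ((l == j)%:R * (2 / x l ^+ 3) + (1 - (l == j)%:R) * (P / (x l * x j)))
     = (P / x j) * (v 0 l / x l) + (l == j)%:R * (v 0 l * (2 / x l ^+ 3 - P / (x l * x j))).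
    by move=> l; rewrite /P; field; rewrite !hx.
  under eq_bigr => l _ do rewrite sp.
  rewrite big_split /= -mulr_sumr [X in _ + X](@sum_pick _ _ j); last first.
    by move=> l /negbTE ->; rewrite mul0r.
  rewrite eqxx mul1r -/S => h.
  apply/eqP; rewrite -subr_eq0 opprK; apply/eqP.
  have -> : v 0 j * (1 + x j ^+ 2) + P * x j ^+ 2 * S = 
     (P / x j * S + v 0 j * (2 / x j ^+ 3 - P / (x j * x j))) * x j ^+ 3
     + v 0 j * (x j ^+ 2 + P * x j - 1).
    by field; apply: hx.
  rewrite h G; ring.
have vj : forall j, v 0 j = - (P * x j ^+ 2 * S) / (1 + x j ^+ 2).
  by move=> j; rewrite -Ej mulfK.
have S0 : S = 0.
  have : S * (1 + \sum_j (1 - x j ^+ 2) / (1 + x j ^+ 2)) = 0.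
    rewrite mulrDr mulr1 mulr_sumr {1}/S -big_split /=; apply: big1 => j _.
    rewrite vj.
    have -> : 1 - x j ^+ 2 = P * x j by apply/eqP; rewrite -subr_eq0; apply/eqP; rewrite -oppr0 -(G j); ring.
    by field; rewrite hx x2.
  by move/eqP; rewrite mulf_eq0 (negbTE Qs) orbF => /eqP.
apply/rowP => j; by rewrite mxE vj S0 mulr0 oppr0 mul0r.
Qed.
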